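(* Let $N,k\ge 10$, let $(X,T)$ be a free Borel $\mathbb{Z}^d$ system with $d>1$, let $0<\delta<1$, and let $r_1<r_2<\cdots$ be natural numbers with $24\sum_{j<l}r_j<\delta r_l$ for all $l$ and $r_1>20k+12Nk/\delta$. Suppose $B_1,B_2,\dots\subseteq X$ are Borel sets such that (i) every connected component of $B_j$ is a coconnected $Nk$-grid union which is a $(1+\delta)$-almost cube of side length $r_j$; (ii) every $x\in X$ lies in some $B_i$; (iii) if $C,D$ are distinct connected components of $B_i$ and $B_j$ respectively then $\partial^{10k}C\cap\partial^{10k}D=\emptyset$. Then for every $i$ and every connected component $C$ of $B_i$, the set $C\setminus\bigcup_{D\in Z}D$ can be tiled by almost $k$-boxes, where $Z$ is the set of connected components $D$ of $B_j$, $j<i$, with $D\subseteq C$.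
   Context: A Borel $\mathbb{Z}^d$ system $(X,T)$ is a standard Borel space with a $\mathbb{Z}^d$-action by Borel automorphisms; free means $T^\gamma x\ne x$ for $\gamma\ne\bar 0$. $X$ is viewed as a graph with $x\sim T^{\pm\epsilon^i}(x)$; connected components of $B\subseteq X$ refer to the induced subgraph. A subset $C$ of the orbit of $x$ is identified (up to translation) with $\{\gamma:T^\gamma x\in C\}\subseteq\mathbb{Z}^d$, and translation-invariant properties (being a grid union, being tiled by boxes, etc.) are read through this identification. $\partial^nB=T^{[-n,n]^d}(B)\setminus B$ with $T^F(B)=\bigcup_{\gamma\in F}T^\gamma(B)$. An $M$-grid union is $B=\gamma+C+[1,M]^d\subseteq\mathbb{Z}^d$ with $C\subseteq M\mathbb{Z}^d$, $B$ and $\mathbb{Z}^d\setminus B$ connected. Coconnected: complement in $\mathbb{Z}^d$ connected. An $\alpha$-almost cube of side length $s$ is a finite $F$ with $S\subseteq F\subseteq S'$ for concentric cubes of side lengths $s$ and $\alpha s$. An almost $k$-box is a box (product of integer intervals) all of whose side lengths lie in $[k,2k]$ with at most one side length different from $k$. *)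

(* Defs.v *)
From HB Require Import structures.
From mathcomp Require Import all_boot all_order all_algebra.
From mathcomp Require Import all_classical all_reals all_analysis.
From mathcomp Require Import Rstruct.
Set Implicit Arguments. Unset Strict Implicit. Unset Printing Implicit Defensive.
Import Order.TTheory GRing.Theory Num.Theory.
Local Open Scope classical_set_scope.
Local Open Scope ring_scope.

Definition Rr : realType := Rdefinitions.R.

Notation Zd d := 'rV[int]_d.
Definition coord {d} (v : Zd d) (i : 'I_d) : int := v ord0 i.
Definition unitv {d} (i : 'I_d) : Zd d := delta_mx ord0 i.

Inductive pconn {V : Type} (adj : V -> V -> Prop) (A : set V) : V -> V -> Prop :=
| pconn_refl x : A x -> pconn adj A x x
| pconn_step x y z : pconn adj A x y -> adj y z -> A z -> pconn adj A x z.

Definition adjZ {d} (a b : Zd d) : Prop :=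
  exists i : 'I_d, b = a + unitv i \/ b = a - unitv i.

Definition Zconnected {d} (S : set (Zd d)) : Prop :=
  forall a b, S a -> S b -> pconn adjZ S a b.

Definition coconnected {d} (S : set (Zd d)) : Prop := Zconnected (~` S).

Definition grid_union {d} (M : nat) (B : set (Zd d)) : Prop :=
  exists (gamma : Zd d) (C : set (Zd d)),
    (forall c, C c -> forall i, (M%:Z %| coord c i)%Z) /\
    B = [set v | exists c u, C c /\ (forall i, 1 <= coord u i <= M%:Z) /\
                             v = gamma + c + u] /\
    Zconnected B /\ Zconnected (~` B).

Definition cubeR {d} (c : 'I_d -> Rr) (l : Rr) : set (Zd d) :=
  [set v | forall i, c i - l / 2 <= (coord v i)%:~R < c i + l / 2].

Definition almost_cube {d} (alpha : Rr) (s : nat) (F : set (Zd d)) : Prop :=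
  finite_set F /\
  exists c : 'I_d -> Rr, cubeR c s%:R `<=` F /\ F `<=` cubeR c (alpha * s%:R).

(* boxes and almost k-boxes; side length = number of integer points *)
Definition box_of {d} (a b : 'I_d -> int) : set (Zd d) :=
  [set v | forall i, a i <= coord v i <= b i].

Definition almost_kbox {d} (k : nat) (Q : set (Zd d)) : Prop :=
  exists a b : 'I_d -> int,
    Q = box_of a b /\
    (forall i, k%:Z <= b i - a i + 1 <= (2 * k)%:Z) /\
    (forall i j, b i - a i + 1 != k%:Z -> b j - a j + 1 != k%:Z -> i = j).

Definition tileable_by_almost_kboxes {d} (k : nat) (S : set (Zd d)) : Prop :=
  exists P : set (set (Zd d)),
    (forall Q, P Q -> almost_kbox k Q) /\
    (forall Q Q', P Q -> P Q' -> Q <> Q' -> Q `&` Q' = set0) /\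
    S = [set v | exists Q, P Q /\ Q v].

(* standard Borel: Borel isomorphic to a Borel subset of R (Kuratowski) *)
Definition standard_borel {dX : measure_display} (X : measurableType dX) : Prop :=
  exists f : X -> measurableTypeR Rr,
    injective f /\ measurable_fun setT f /\
    (forall A : set X, measurable A -> measurable (f @` A)).

Definition borel_action {dX : measure_display} {X : measurableType dX} {d : nat}
    (T : Zd d -> X -> X) : Prop :=
  (forall x, T 0 x = x) /\
  (forall a b x, T (a + b) x = T a (T b x)) /\
  (forall g, measurable_fun setT (T g)).

Definition free_action {X : Type} {d} (T : Zd d -> X -> X) : Prop :=
  forall g x, T g x = x -> g = 0.

Definition adjX {X : Type} {d} (T : Zd d -> X -> X) (x y : X) : Prop :=
  exists i : 'I_d, y = T (unitv i) x \/ y = T (- unitv i) x.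

Definition component {X : Type} {d} (T : Zd d -> X -> X) (B C : set X) : Prop :=
  exists x, B x /\ C = [set y | pconn (adjX T) B x y].

Definition boundary {X : Type} {d} (T : Zd d -> X -> X) (n : nat) (B : set X) : set X :=
  [set y | exists g x, (forall i, `|coord g i| <= n%:Z) /\ B x /\ y = T g x] `\` B.

(* translation-invariant property P of subsets of Z^d read on a subset of an orbit *)
Definition on_orbit {X : Type} {d} (T : Zd d -> X -> X)
    (P : set (Zd d) -> Prop) (C : set X) : Prop :=
  exists x, (forall y, C y -> exists g, y = T g x) /\ P [set g | C (T g x)].

(* Main.v *)
Require Import Defs.
From HB Require Import structures.
From mathcomp Require Import all_boot all_order all_algebra.
From mathcomp Require Import all_classical all_reals all_analysis.
From mathcomp Require Import Rstruct.
From mathcomp Require Import zify ring.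
Import Order.TTheory GRing.Theory Num.Theory.
Local Open Scope classical_set_scope.
Local Open Scope ring_scope.
From Stdlib Require Import ClassicalEpsilon.
Local Notation crd := Defs.coord.

Lemma mlt {n t : int} : 0 < n -> t * n < n -> t <= 0.
Proof. move=> n0; rewrite -[X in _ < X]mul1r ltr_pM2r //; lia. Qed.
Lemma mgt {n t : int} : 0 < n -> 0 < t * n -> 1 <= t.
Proof. move=> n0; rewrite -[X in X < _](mul0r n) ltr_pM2r //; lia. Qed.
Lemma mgtn {n t : int} : 0 < n -> - n < t * n -> 0 <= t.
Proof. move=> n0; rewrite -mulN1r ltr_pM2r //; lia. Qed.

Definition dv (n x : int) := exists t : int, x = t * n.

Lemma dvD n a b : dv n a -> dv n b -> dv n (a + b).
Proof. by move=> [s ->] [t ->]; exists (s + t); rewrite mulrDl. Qed.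
Lemma dvN n a : dv n a -> dv n (- a).
Proof. by move=> [s ->]; exists (- s); rewrite mulNr. Qed.
Lemma dvB n a b : dv n a -> dv n b -> dv n (a - b).
Proof. by move=> ha hb; apply: dvD => //; apply: dvN. Qed.
Lemma dv0 n : dv n 0. Proof. by exists 0; rewrite mul0r. Qed.
Lemma dvn n : dv n n. Proof. by exists 1; rewrite mul1r. Qed.
Lemma dv_trans {k M x : int} : dv k M -> dv M x -> dv k x.
Proof. by move=> [s ->] [t ->]; exists (t * s); rewrite mulrA. Qed.
Lemma dv_eq {a b n : int} : a = b -> dv n b -> dv n a. Proof. by move=> ->. Qed.

Lemma H1 {n u uu x : int} : 0 < n -> dv n (u - uu) -> u < x <= u + n -> uu < x <= uu + n -> u = uu.
Proof. move=> n0 [t e] h1 h2.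
have a : t <= 0 by apply: (mlt n0); lia.
have b : 0 <= t by apply: (mgtn n0); lia.
have t0 : t = 0 by lia. rewrite t0 mul0r in e; lia. Qed.

Lemma H2 {n u A B x y : int} : 0 < n -> dv n (A - u) -> dv n (B - u) ->
  u < x <= u + n -> A < x <= B -> u < y <= u + n -> A < y <= B.
Proof. move=> n0 [s e1] [t e2] h1 h2 h3.
have hs : s <= 0 by apply: (mlt n0); lia.
have ht : 1 <= t by apply: (mgt n0); lia.
have : s * n <= 0 by rewrite -(mul0r n) ler_pM2r //.
have : n <= t * n by rewrite -[X in X <= _]mul1r ler_pM2r //.
lia. Qed.

Lemma H3 {n x : int} : 0 < n -> dv n x -> 0 < x < n -> False.
Proof. move=> n0 [t e] h.
have hs : t <= 0 by apply: (mlt n0); lia.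
have ht : 1 <= t by apply: (mgt n0); lia. lia. Qed.

Lemma cellP (k o x : int) : 0 < k -> exists lo, dv k (lo - o) /\ lo < x <= lo + k.
Proof. move=> k0. exists (o + ((x - o - 1) %/ k)%Z * k). split.
  by exists ((x - o - 1) %/ k)%Z; rewrite addrC addKr.
have := divz_eq (x - o - 1) k. have := modz_ge0 (x - o - 1) (lt0r_neq0 k0).
have := ltz_pmod (x - o - 1) k0. lia. Qed.

Lemma crd_row {d} (f : 'I_d -> int) j : crd (\row_j0 f j0) j = f j.
Proof. by rewrite /Defs.coord mxE. Qed.
Lemma crdD {d} (a b : Zd d) j : crd (a + b) j = crd a j + crd b j.
Proof. by rewrite /Defs.coord mxE. Qed.
Lemma crdN {d} (a : Zd d) j : crd (- a) j = - crd a j.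
Proof. by rewrite /Defs.coord mxE. Qed.
Lemma crdB {d} (a b : Zd d) j : crd (a - b) j = crd a j - crd b j.
Proof. by rewrite crdD crdN. Qed.

Definition near {d} (n : int) (p q : Zd d) := forall j, `|crd p j - crd q j| <= n.

Definition gform {d} (M : int) (g : Zd d) (Cs : set (Zd d)) (S : set (Zd d)) :=
  (forall c, Cs c -> forall j, dv M (crd c j)) /\
  (forall v, S v <-> exists c, Cs c /\ forall j, crd g j + crd c j < crd v j <= crd g j + crd c j + M).

Record prm d := Prm { pk : int; pM : int; pgC : Zd d; pg : Zd d; pCs : set (Zd d) }.
Arguments pk {d}. Arguments pM {d}. Arguments pgC {d}. Arguments pg {d}. Arguments pCs {d}.
Definition good {d} (p : prm d) := 0 < pk p /\ 3 * pk p < pM p /\ dv (pk p) (pM p) /\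
  (forall c, pCs p c -> forall j, dv (pM p) (crd c j)).
Definition sg {d} (p : prm d) j := ((crd (pgC p) j - crd (pg p) j) %% pk p)%Z.

Lemma sgP {d} (p : prm d) j : 0 < pk p -> 0 <= sg p j < pk p /\ dv (pk p) (crd (pgC p) j - crd (pg p) j - sg p j).
Proof. move=> k0; rewrite /sg; split.
  by rewrite modz_ge0 ?lt0r_neq0 // ltz_pmod.
exists ((crd (pgC p) j - crd (pg p) j) %/ pk p)%Z.
have := divz_eq (crd (pgC p) j - crd (pg p) j) (pk p). lia. Qed.

Definition rng {d} (p : prm d) (m : nat) (c : Zd d) (j : 'I_d) (x : int) :=
  if (j < m)%N then
     crd (pg p) j + crd c j - (2 * pk p - sg p j) < x <= crd (pg p) j + crd c j + pM p + (pk p + sg p j)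
   else crd (pg p) j + crd c j < x <= crd (pg p) j + crd c j + pM p.
Definition inF {d} (p : prm d) (m : nat) (c v : Zd d) := forall j : 'I_d, rng p m c j (crd v j).
Definition Flev {d} (p : prm d) (m : nat) (v : Zd d) := exists c, pCs p c /\ inF p m c v.

Lemma Fmono {d} (p : prm d) m m' v : good p -> (m <= m')%N -> Flev p m v -> Flev p m' v.
Proof. move=> [k0 _] le [c [hc h]]; exists c; split => // j; have := h j.
have := sgP p j k0. rewrite /rng.
case: ifP => hj; case: ifP => hj' //; try lia.
all: by move: hj'; rewrite (leq_trans hj le). Qed.

Lemma F0 {d} (p : prm d) S v : gform (pM p) (pg p) (pCs p) S -> (S v <-> Flev p 0 v).
Proof. move=> [_ e]; rewrite e; split; move=> [c [hc h]]; exists c; split => // j; by have := h j. Qed.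

Lemma Fnear {d} (p : prm d) m v S : good p -> gform (pM p) (pg p) (pCs p) S -> Flev p m v ->
  exists q, S q /\ near (2 * pk p) v q.
Proof. move=> [k0 [kM _]] gS [c [hc h]].
pose f j := if crd v j <= crd (pg p) j + crd c j then crd (pg p) j + crd c j + 1
  else if crd v j <= crd (pg p) j + crd c j + pM p then crd v j else crd (pg p) j + crd c j + pM p.
exists (\row_j f j). split.
  apply/(proj2 gS); exists c; split => // j. have := h j; rewrite /rng crd_row /f.
  have := sgP p j k0. case: ifP => _ ?; case: ifP => ?; try case: ifP => ?; lia.
move=> j; have := h j; rewrite /rng; have := sgP p j k0. rewrite crd_row /f.
case: ifP => _; case: ifP => ?; try case: ifP => ?; lia. Qed.

Definition off {d} (p : prm d) (i : nat) (j : 'I_d) := if (j < i)%N then crd (pgC p) j else crd (pg p) j.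

Lemma coord_cell {d} (p : prm d) m c j lo x y : good p -> pCs p c -> dv (pk p) (lo - off p m j) ->
  lo < x <= lo + pk p -> lo < y <= lo + pk p -> rng p m c j x -> rng p m c j y.
Proof. move=> [k0 [kM [dkM dM]]] hc dl hx hy. have dc := dv_trans dkM (dM c hc j).
have [_ ds] := sgP p j k0.
rewrite /rng; move: dl; rewrite /off; case: ifP => _ dl hr.
- apply: (H2 k0 _ _ hx hr hy).
  + apply: (dv_eq (_ : _ = (crd c j - 2 * pk p - (crd (pgC p) j - crd (pg p) j - sg p j)) - (lo - crd (pgC p) j))).
      by ring.
    apply: dvB => //; apply: dvB => //; apply: dvB => //. by exists 2.
  + apply: (dv_eq (_ : _ = (crd c j + pM p + pk p - (crd (pgC p) j - crd (pg p) j - sg p j)) - (lo - crd (pgC p) j))).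
      by ring.
    apply: dvB => //; apply: dvB => //; apply: dvD => //; [apply: dvD => // | apply: dvn].
- apply: (H2 k0 _ _ hx hr hy).
  + apply: (dv_eq (_ : _ = crd c j - (lo - crd (pg p) j))). by ring.
    by apply: dvB.
  + apply: (dv_eq (_ : _ = crd c j + pM p - (lo - crd (pg p) j))). by ring.
    by apply: dvB => //; apply: dvD.
Qed.

Definition cl (k o x : int) := o + ((x - o - 1) %/ k)%Z * k.
Lemma clP (k o x : int) : 0 < k -> dv k (cl k o x - o) /\ cl k o x < x <= cl k o x + k.
Proof. move=> k0; rewrite /cl; split.
  by exists ((x - o - 1) %/ k)%Z; rewrite addrC addKr.
have := divz_eq (x - o - 1) k. have := modz_ge0 (x - o - 1) (lt0r_neq0 k0).
have := ltz_pmod (x - o - 1) k0. lia. Qed.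

Definition exttile {d} (p : prm d) (Q : set (Zd d)) :=
 exists (i : 'I_d) (lo hi : 'I_d -> int),
  Q = box_of (fun j => lo j + 1) hi /\
  (forall j, j != i -> hi j = lo j + pk p /\ dv (pk p) (lo j - off p i j)) /\
  ((dv (pM p) (hi i - crd (pg p) i) /\ lo i = hi i - (2 * pk p - sg p i)) \/
   (dv (pM p) (lo i - crd (pg p) i) /\ hi i = lo i + (pk p + sg p i))) /\
  Q `<=` Flev p i.+1 /\ (forall v, Q v -> ~ Flev p i v).

Lemma find_level {d} (p : prm d) m v : Flev p m v -> ~ Flev p 0 v ->
  exists i, (i < m)%N /\ Flev p i.+1 v /\ ~ Flev p i v.
Proof. elim: m => [|m IH] h n0; first by [].
case: (classic (Flev p m v)) => hm.
  by have [i [? ?]] := IH hm n0; exists i; split => //; apply: ltnW.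
by exists m. Qed.


Lemma ltSne {d} (j i : 'I_d) : j != i -> (j < i.+1)%N = (j < i)%N.
Proof. move=> ne; rewrite ltnS leq_eqVlt. by have -> : (nat_of_ord j == nat_of_ord i) = false by apply/negbTE. Qed.

Lemma off_S {d} (p : prm d) (i j : 'I_d) : j != i -> off p i.+1 j = off p i j.
Proof. by move=> ne; rewrite /off ltSne. Qed.
Lemma rng_S {d} (p : prm d) (i j : 'I_d) c x : j != i -> rng p i.+1 c j x = rng p i c j x.
Proof. by move=> ne; rewrite /rng ltSne. Qed.

Lemma ext_cover {d} (p : prm d) S v : good p -> gform (pM p) (pg p) (pCs p) S ->
  Flev p d v -> ~ S v -> exists Q, exttile p Q /\ Q v.
Proof.
move=> gp gS hv nS.
have [k0 [kM [dkM dM]]] := gp.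
have n0 : ~ Flev p 0 v by move=> h; apply: nS; apply/(F0 _ _ _ gS).
have [i0 [ltid [F1 nF]]] := find_level _ _ _ hv n0.
pose io := Ordinal ltid. have {}F1 : Flev p (nat_of_ord io).+1 v := F1. have {}nF : ~ Flev p (nat_of_ord io) v := nF.
have [c [hc h]] := F1.
have hfail : ~ (crd (pg p) io + crd c io < crd v io <= crd (pg p) io + crd c io + pM p).
  move=> hb; apply: nF; exists c; split => // j.
  case: (eqVneq j io) => [->|ne]; first by rewrite /rng ltnn.
  by rewrite -rng_S //; apply: h.
have hio := h io; rewrite /rng ltnSn in hio.
have [s0 ds] := sgP p io k0.
set A := crd (pg p) io + crd c io in hfail hio *.
pose lo j := if j == io then (if crd v io <= A then A - (2 * pk p - sg p io) else A + pM p)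
             else cl (pk p) (off p io j) (crd v j).
pose hi j := if j == io then (if crd v io <= A then A else A + pM p + (pk p + sg p io))
             else lo j + pk p.
have hmem : forall j, j != io -> lo j < crd v j <= lo j + pk p /\ dv (pk p) (lo j - off p io j).
  move=> j ne; rewrite /lo (negbTE ne). by have [? ?] := clP (pk p) (off p io j) (crd v j) k0.
have hblock : forall q, box_of (fun j => lo j + 1) hi q -> ~ Flev p io q.
  move=> q hq [c' [hc' h']]. apply: nF; exists c'; split => // j.
  case: (eqVneq j io) => [->|ne].
  - have := h' io; rewrite /rng ltnn => hq'.
    have := hq io; rewrite /lo /hi eqxx.
    have dc' := dM c' hc' io. have dc := dM c hc io.
    case: ifP => hle hqi.
    + have M0 : 0 < pM p by lia.
      have dd : dv (pM p) ((A - pM p) - (crd (pg p) io + crd c' io)).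
        apply: (dv_eq (_ : _ = crd c io - crd c' io - pM p)); first by rewrite /A; ring.
        by apply: dvB; [apply: dvB|apply: dvn].
      have hq1 : A - pM p < crd q io <= A - pM p + pM p by lia.
      have e := H1 M0 dd hq1 hq'.
      rewrite -e. lia.
    + have M0 : 0 < pM p by lia.
      have dd : dv (pM p) ((A + pM p) - (crd (pg p) io + crd c' io)).
        apply: (dv_eq (_ : _ = crd c io - crd c' io + pM p)); first by rewrite /A; ring.
        by apply: dvD; [apply: dvB|apply: dvn].
      have hq1 : A + pM p < crd q io <= A + pM p + pM p by lia.
      have e := H1 M0 dd hq1 hq'.
      rewrite -e. lia.
  - have [hv' dl] := hmem j ne.
    have := hq j; rewrite /hi (negbTE ne) => hqj.
    have hq1 : lo j < crd q j <= lo j + pk p by lia.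
    exact: (coord_cell _ _ _ _ _ _ _ gp hc' dl hq1 hv' (h' j)).
exists (box_of (fun j => lo j + 1) hi); split; last first.
  move=> j; case: (eqVneq j io) => [->|ne].
  - rewrite /lo /hi eqxx; case: ifP => hle; lia.
  - have [? ?] := hmem j ne. rewrite /hi (negbTE ne). lia.
exists io, lo, hi; split => //; split.
  move=> j ne; split; first by rewrite /hi (negbTE ne).
  by have [? ?] := hmem j ne.
split.
  rewrite /lo /hi eqxx; case: ifP => hle; [left|right]; split => //.
  + by apply: (dv_eq (_ : _ = crd c io)); [rewrite /A; ring | apply: dM].
  + apply: (dv_eq (_ : _ = crd c io + pM p)); [rewrite /A; ring | apply: dvD; [apply: dM|apply: dvn]] => //.
split => //.
move=> q hq; exists c; split => // j.
case: (eqVneq j io) => [->|ne].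
- rewrite /rng ltnSn. have := hq io; rewrite /lo /hi eqxx; case: ifP => hle; lia.
- rewrite rng_S //. have [hv' dl] := hmem j ne.
  have := hq j; rewrite /hi (negbTE ne) => hqj.
  have hq1 : lo j < crd q j <= lo j + pk p by lia.
  have hj := h j; rewrite rng_S // in hj.
  exact: (coord_cell _ _ _ _ _ _ _ gp hc dl hv' hq1 hj).
Qed.

Lemma ext_level {d} (p : prm d) Q w : good p -> exttile p Q -> Q w ->
  exists i : 'I_d, Flev p i.+1 w /\ ~ Flev p i w.
Proof. move=> _ [i [lo [hi [_ [_ [_ [h1 h2]]]]]]] hw. by exists i; split; [apply: h1|apply: h2]. Qed.

Lemma ext_disj {d} (p : prm d) Q Q' w : good p -> exttile p Q -> exttile p Q' -> Q w -> Q' w -> Q = Q'.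
Proof.
move=> gp [i [lo [hi [QE [ho [hs [h1 h2]]]]]]] [i' [lo' [hi' [QE' [ho' [hs' [h1' h2']]]]]]] hw hw'.
have [k0 [kM [dkM dM]]] := gp.
have ii : i = i'.
  apply: val_inj => /=. case: (ltngtP i i') => // hlt.
  - by exfalso; apply: (h2' _ hw'); apply: (Fmono _ _ _ _ gp hlt); apply: h1.
  - by exfalso; apply: (h2 _ hw); apply: (Fmono _ _ _ _ gp hlt); apply: h1'.
subst i'.
have [s0 ds] := sgP p i k0.
have bw := hw; rewrite QE in bw. have bw' := hw'; rewrite QE' in bw'.
have eq : forall j, lo j = lo' j /\ hi j = hi' j.
  move=> j; case: (eqVneq j i) => [->|ne].
  - have := bw i; have := bw' i => /= b' b.
    case: hs => [[da ea]|[da ea]]; case: hs' => [[da' ea']|[da' ea']].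
    + have M0 : 0 < pM p by lia.
      have dd : dv (pM p) ((hi i - pM p) - (hi' i - pM p)).
        apply: (dv_eq (_ : _ = (hi i - crd (pg p) i) - (hi' i - crd (pg p) i))); first by ring.
        exact: dvB.
      have x1 : hi i - pM p < crd w i <= hi i - pM p + pM p by lia.
      have x2 : hi' i - pM p < crd w i <= hi' i - pM p + pM p by lia.
      have e := H1 M0 dd x1 x2. lia.
    + have M0 : 0 < pM p by lia.
      have dd : dv (pM p) (hi i - lo' i).
        apply: (dv_eq (_ : _ = (hi i - crd (pg p) i) - (lo' i - crd (pg p) i))); first by ring.
        exact: dvB.
      have x1 : 0 < hi i - lo' i < pM p by lia.
      by have := H3 M0 dd x1.
    + have M0 : 0 < pM p by lia.
      have dd : dv (pM p) (hi' i - lo i).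
        apply: (dv_eq (_ : _ = (hi' i - crd (pg p) i) - (lo i - crd (pg p) i))); first by ring.
        exact: dvB.
      have x1 : 0 < hi' i - lo i < pM p by lia.
      by have := H3 M0 dd x1.
    + have M0 : 0 < pM p by lia.
      have dd : dv (pM p) (lo i - lo' i).
        apply: (dv_eq (_ : _ = (lo i - crd (pg p) i) - (lo' i - crd (pg p) i))); first by ring.
        exact: dvB.
      have x1 : lo i < crd w i <= lo i + pM p by lia.
      have x2 : lo' i < crd w i <= lo' i + pM p by lia.
      have e := H1 M0 dd x1 x2. lia.
  - have [e1 d1] := ho j ne. have [e1' d1'] := ho' j ne.
    have := bw j; have := bw' j => /= b' b.
    have dd : dv (pk p) (lo j - lo' j).
      apply: (dv_eq (_ : _ = (lo j - off p i j) - (lo' j - off p i j))); first by ring.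
      exact: dvB.
    have x1 : lo j < crd w j <= lo j + pk p by lia.
    have x2 : lo' j < crd w j <= lo' j + pk p by lia.
    have e := H1 k0 dd x1 x2. lia.
rewrite QE QE'.
have -> : hi = hi' by apply: boolp.funext => j; case: (eq j).
have -> : lo = lo' by apply: boolp.funext => j; case: (eq j).
by [].
Qed.

Lemma ext_sub {d} (p : prm d) Q : good p -> exttile p Q -> Q `<=` Flev p d.
Proof. move=> gp [i [lo [hi [_ [_ [_ [h1 _]]]]]]] v /h1. by apply: Fmono. Qed.

Lemma ext_notS {d} (p : prm d) S Q v : good p -> gform (pM p) (pg p) (pCs p) S -> exttile p Q -> Q v -> ~ S v.
Proof. move=> gp gS [i [lo [hi [_ [_ [_ [_ h2]]]]]]] hv /(F0 _ _ _ gS) h0.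
by apply: (h2 _ hv); apply: (Fmono _ _ _ _ gp (leq0n i)). Qed.

Lemma ext_near {d} (p : prm d) Q v w : good p -> exttile p Q -> Q v -> Q w -> near (2 * pk p) v w.
Proof. move=> [k0 _] [i [lo [hi [QE [ho [hs _]]]]]]; rewrite QE => hv hw j.
have [s0 _] := sgP p i k0.
case: (eqVneq j i) => [->|ne].
- have := hv i; have := hw i => /= a b. case: hs => [[_ e]|[_ e]]; lia.
- have := hv j; have := hw j => /= a b. have [e _] := ho j ne. lia.
Qed.

Lemma ext_akbox {d} (p : prm d) (kn : nat) Q : good p -> pk p = kn%:Z -> exttile p Q -> almost_kbox kn Q.
Proof. move=> [k0 _] ek [i [lo [hi [QE [ho [hs _]]]]]].
have [s0 _] := sgP p i k0.
exists (fun j => lo j + 1), hi; split => //; split.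
  move=> j; case: (eqVneq j i) => [->|ne].
  - case: hs => [[_ e]|[_ e]]; rewrite e; lia.
  - have [e _] := ho j ne; rewrite e; lia.
move=> j1 j2 n1 n2.
have f : forall j, hi j - (lo j + 1) + 1 != kn%:Z -> j = i.
  move=> j; case: (eqVneq j i) => // ne; have [e _] := ho j ne; rewrite e -ek.
  by move/negP; case; apply/eqP; ring.
by rewrite (f _ n1) (f _ n2).
Qed.

Definition ccell {d} (k : int) (gC : Zd d) (Q : set (Zd d)) :=
  exists lo : 'I_d -> int, (forall j, dv k (lo j - crd gC j)) /\ Q = box_of (fun j => lo j + 1) (fun j => lo j + k).

Lemma ccell_akbox {d} (kn : nat) gC (Q : set (Zd d)) : ccell kn%:Z gC Q -> almost_kbox kn Q.
Proof. move=> [lo [_ ->]]. exists (fun j => lo j + 1), (fun j => lo j + kn%:Z); split => //; split.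
  move=> j; lia.
move=> j1 j2 /negP n1; exfalso; apply: n1; apply/eqP; ring. Qed.

Lemma ccell_cover {d} (k : int) (gC v : Zd d) : 0 < k -> exists Q, ccell k gC Q /\ Q v.
Proof. move=> k0. exists (box_of (fun j => cl k (crd gC j) (crd v j) + 1) (fun j => cl k (crd gC j) (crd v j) + k)).
split.
  by exists (fun j => cl k (crd gC j) (crd v j)); split => // j; have [] := clP k (crd gC j) (crd v j) k0.
move=> j /=; have [_ ?] := clP k (crd gC j) (crd v j) k0. lia. Qed.

Lemma ccell_disj {d} (k : int) (gC : Zd d) Q Q' w : 0 < k -> ccell k gC Q -> ccell k gC Q' -> Q w -> Q' w -> Q = Q'.
Proof. move=> k0 [lo [dl QE]] [lo' [dl' QE']]; rewrite QE QE' => hw hw'.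
have e : lo = lo'.
  apply: boolp.funext => j. have := hw j; have := hw' j => /= a b.
  have dd : dv k (lo j - lo' j).
    apply: (dv_eq (_ : _ = (lo j - crd gC j) - (lo' j - crd gC j))); first by ring.
    exact: dvB.
  have x1 : lo j < crd w j <= lo j + k by lia.
  have x2 : lo' j < crd w j <= lo' j + k by lia.
  exact: H1 k0 dd x1 x2.
by rewrite e. Qed.

Lemma Fcell {d} (p : prm d) Q v w : good p -> ccell (pk p) (pgC p) Q -> Q v -> Q w -> Flev p d w -> Flev p d v.
Proof. move=> gp [lo [dl QE]]; rewrite QE => hv hw [c [hc h]].
exists c; split => // j. have := hv j; have := hw j => /= a b.
have dl' : dv (pk p) (lo j - off p d j) by rewrite /off ltn_ord.
have x1 : lo j < crd w j <= lo j + pk p by lia.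
have x2 : lo j < crd v j <= lo j + pk p by lia.
exact: (coord_cell _ _ _ _ _ _ _ gp hc dl' x1 x2 (h j)). Qed.

Lemma Ccell_in {d} (k M : int) gC CsC (Cset : set (Zd d)) Q v : 0 < k -> dv k M ->
  gform M gC CsC Cset -> ccell k gC Q -> Q v -> Cset v -> Q `<=` Cset.
Proof. move=> k0 dkM [dM CE] [lo [dl QE]]; rewrite QE => hv /CE [c [hc h]] w hw.
apply/CE; exists c; split => // j. have := hv j; have := hw j => /= a b.
have dc := dv_trans dkM (dM c hc j).
have x1 : lo j < crd v j <= lo j + k by lia.
have x2 : lo j < crd w j <= lo j + k by lia.
apply: (H2 k0 _ _ x1 (h j) x2).
- apply: (dv_eq (_ : _ = crd c j - (lo j - crd gC j))); first by ring. exact: dvB.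
- apply: (dv_eq (_ : _ = crd c j + M - (lo j - crd gC j))); first by ring. by apply: dvB => //; apply: dvD.
Qed.

Definition dat {d} (M : int) (S : set (Zd d)) : Zd d * set (Zd d) :=
  epsilon (inhabits (0, set0)) (fun x => gform M x.1 x.2 S).

Lemma core {d} (kn N : nat) (hk : (1 <= kn)%N) (hN : (4 <= N)%N) (gC : Zd d) CsC Cset
  (Zf : set (set (Zd d))) :
 gform (N * kn)%:Z gC CsC Cset ->
 (forall S, Zf S -> exists g Cs, gform (N * kn)%:Z g Cs S) ->
 (forall S, Zf S -> forall p q, S q -> near (2 * kn%:Z) p q -> ~ S p -> Cset p) ->
 (forall S S', Zf S -> Zf S' -> S <> S' -> forall p q q', S q -> S' q' ->
     near (2 * kn%:Z) p q -> near (2 * kn%:Z) p q' -> ~ S p -> ~ S' p -> False) ->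
 tileable_by_almost_kboxes kn [set v | Cset v /\ ~ (exists S, Zf S /\ S v)].
Proof.
move=> gCs hZ hC hDD.
set k : int := kn%:Z. set M : int := (N * kn)%:Z.
pose pp S : prm d := @Prm d k M gC (dat M S).1 (dat M S).2.
have k0 : 0 < k by rewrite /k; lia.
have dkM : dv k M by exists N%:Z; rewrite /M /k; lia.
have gpS : forall S, Zf S -> gform M (pg (pp S)) (pCs (pp S)) S.
  move=> S /hZ [g [Cs h]]. rewrite /pp /dat /=.
  by apply: (epsilon_spec (inhabits (0, set0)) (fun x => gform M x.1 x.2 S)); exists (g, Cs).
have gp : forall S, Zf S -> good (pp S).
  move=> S /gpS [dM _]; split => //; split; first by rewrite /= /k /M; nia.
  by split.
set Reg := [set v | Cset v /\ ~ (exists S, Zf S /\ S v)].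
pose P (Q : set (Zd d)) := Q `<=` Reg /\ ((exists S, Zf S /\ exttile (pp S) Q) \/
   (ccell k gC Q /\ forall S, Zf S -> forall u, Q u -> ~ Flev (pp S) d u)).
have FS : forall S u, Zf S -> S u -> Flev (pp S) d u.
  move=> S u zS hu. apply: (Fmono _ _ _ _ (gp S zS) (leq0n d)). by apply/(F0 _ _ _ (gpS S zS)).
exists P; split; last split.
- move=> Q [_ [[S [zS hE]]|[hc _]]].
  + exact: (ext_akbox _ _ _ (gp S zS) erefl hE).
  + exact: (ccell_akbox _ _ _ hc).
- move=> Q Q' [sQ hQ] [sQ' hQ'] ne. apply/seteqP; split => // w [hw hw']; exfalso; apply: ne.
  have [_ nw] := sQ w hw.
  case: hQ => [[S [zS hE]]|[hc hc0]]; case: hQ' => [[S' [zS' hE']]|[hc' hc0']].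
  + case: (classic (S = S')) => [eS|nS].
      subst S'. exact: (ext_disj _ _ _ _ (gp S zS) hE hE' hw hw').
    have [q [Sq nq]] := Fnear _ _ _ _ (gp S zS) (gpS S zS) (ext_sub _ _ (gp S zS) hE w hw).
    have [q' [Sq' nq']] := Fnear _ _ _ _ (gp S' zS') (gpS S' zS') (ext_sub _ _ (gp S' zS') hE' w hw').
    exfalso; apply: (hDD S S' zS zS' nS w q q' Sq Sq' nq nq').
    * by move=> h; apply: nw; exists S.
    * by move=> h; apply: nw; exists S'.
  + by exfalso; apply: (hc0' S zS w hw'); apply: (ext_sub _ _ (gp S zS) hE).
  + by exfalso; apply: (hc0 S' zS' w hw); apply: (ext_sub _ _ (gp S' zS') hE').
  + exact: (ccell_disj _ _ _ _ _ k0 hc hc' hw hw').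
- apply/seteqP; split => v; last by move=> [Q [[sQ _] hQ]]; apply: sQ.
  move=> hv; have [Cv nv] := hv.
  case: (classic (exists S, Zf S /\ Flev (pp S) d v)) => [[S [zS hF]]|nF].
  + have nSv : ~ S v by move=> h; apply: nv; exists S.
    have [Q [hE hQ]] := ext_cover _ _ _ (gp S zS) (gpS S zS) hF nSv.
    exists Q; split => //; split; last by left; exists S.
    move=> q hq.
    have Fq := ext_sub _ _ (gp S zS) hE q hq.
    have nSq := ext_notS _ _ _ _ (gp S zS) (gpS S zS) hE hq.
    have [q0 [Sq0 nq0]] := Fnear _ _ _ _ (gp S zS) (gpS S zS) Fq.
    split.
      apply: (hC S zS q q0 Sq0 nq0 nSq).
    move=> [S' [zS' S'q]].
    case: (classic (S = S')) => [eS|nS]; first by subst S'; apply: nSq.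
    have [v0 [Sv0 nv0]] := Fnear _ _ _ _ (gp S zS) (gpS S zS) hF.
    have nvq := ext_near _ _ _ _ (gp S zS) hE hq hq.
    apply: (hDD S S' zS zS' nS v v0 q Sv0 S'q nv0 _ nSv).
    * exact: (ext_near _ _ _ _ (gp S zS) hE hQ hq).
    * by move=> h; apply: nv; exists S'.
  + have [Q [hc hQ]] := ccell_cover k gC v k0.
    have hc0 : forall S, Zf S -> forall u, Q u -> ~ Flev (pp S) d u.
      move=> S zS u hu hFu; apply: nF; exists S; split => //.
      exact: (Fcell _ _ _ _ (gp S zS) hc hQ hu hFu).
    exists Q; split => //; split; last by right.
    move=> q hq; split.
      exact: (Ccell_in _ _ _ _ _ _ _ k0 dkM gCs hc hQ Cv q hq).
    move=> [S [zS Sq]]. exact: (hc0 S zS q hq (FS S q zS Sq)).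
Qed.

Lemma gu_gform {d} (M : nat) (S : set (Zd d)) : grid_union M S -> exists g Cs, gform M%:Z g Cs S.
Proof. move=> [g [Cs [dC [SE _]]]]. exists g, Cs; split.
  by move=> c /dC h j; have /dvdzP := h j.
move=> v; rewrite SE /=; split.
  move=> [c [u [hc [hu ->]]]]; exists c; split => // j. have := hu j. rewrite !crdD. lia.
move=> [c [hc h]]; exists c, (v - g - c); split => //; split.
  by move=> j; have := h j; rewrite !crdB; lia.
by apply/rowP => j; rewrite !mxE; ring.
Qed.

Lemma gform_tr {d} (M : int) g Cs (S : set (Zd d)) (h : Zd d) : gform M g Cs S ->
  gform M (g + h) Cs [set v | S (v - h)].
Proof. move=> [dC SE]; split => // v /=; rewrite SE; split.
  by move=> [c [hc hh]]; exists c; split => // j; have := hh j; rewrite crdB crdD; lia.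
by move=> [c [hc hh]]; exists c; split => // j; have := hh j; rewrite crdB crdD; lia.
Qed.

Theorem lemma6p2
  (N k : nat) (hN : (10 <= N)%N) (hk : (10 <= k)%N)
  (d : nat) (hd : (1 < d)%N)
  (dX : measure_display) (X : measurableType dX) (hX : standard_borel X)
  (T : Zd d -> X -> X) (hT : borel_action T) (hfree : free_action T)
  (delta : Rr) (hdelta : 0 < delta < 1)
  (r : nat -> nat) (hr_incr : forall l, (r l < r l.+1)%N)
  (hr_sum : forall l, 24 * (\sum_(j < l) r j)%N%:R < delta * (r l)%:R)
  (hr_first : (20 * k)%:R + (12 * N * k)%:R / delta < (r 0)%:R :> Rr)
  (B : nat -> set X) (hBmeas : forall j, measurable (B j))
  (h_i : forall j C, component T (B j) C ->
           on_orbit T (fun S => coconnected S /\ grid_union (N * k) S /\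
                                almost_cube (1 + delta) (r j) S) C)
  (h_ii : forall x, exists i, B i x)
  (h_iii : forall i j C D, component T (B i) C -> component T (B j) D -> C <> D ->
             boundary T (10 * k) C `&` boundary T (10 * k) D = set0) :
  forall i C, component T (B i) C ->
    on_orbit T (tileable_by_almost_kboxes k)
      (C `\` [set x | exists D, (exists j, (j < i)%N /\ component T (B j) D) /\
                                D `<=` C /\ D x]).
Proof.
move=> i C compC.
have [hT0 [hTadd _]] := hT.
have Tsub : forall a b x, T (a - b) (T b x) = T a x.
  by move=> a b x; rewrite -hTadd subrK.
have [xC [orbC [_ [guC _]]]] := h_i i C compC.
set Cset := [set g | C (T g xC)].
have [gC [CsC gCs]] := gu_gform _ _ guC.
set U := [set x | exists D, (exists j, (j < i)%N /\ component T (B j) D) /\ D `<=` C /\ D x].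
exists xC; split.
  by move=> y [Cy _]; apply: orbC.
case: (classic (exists D, (exists j, (j < i)%N /\ component T (B j) D) /\ D `<=` C /\ D = C)) => [[D [hD [sD eD]]]|nDC].
  exists set0; split => //; split => //.
  apply/seteqP; split => v //=; last by move=> [Q [[]]].
  by move=> [Cv nU]; exfalso; apply: nU; exists D; split => //; split => //; rewrite eD.
pose Zf := [set S : set (Zd d) | exists D, (exists j, (j < i)%N /\ component T (B j) D) /\ D `<=` C /\
                S = [set g | D (T g xC)]].
have RE : [set g | (C `\` U) (T g xC)] = [set v | Cset v /\ ~ (exists S, Zf S /\ S v)].
  apply/seteqP; split => v /= [Cv nU]; split => // hh; apply: nU.
  - move: hh => [S [[D [hD [sD ->]]] hv]]. by exists D.
  - move: hh => [D [hD [sD hv]]]. exists [set g | D (T g xC)]; split => //. by exists D.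
rewrite RE.
have hk1 : (1 <= k)%N by apply: leq_trans hk.
have hN4 : (4 <= N)%N by apply: leq_trans hN.
have bnd : forall (p q : Zd d), near (2 * k%:Z) p q -> forall j, `|crd (p - q) j| <= (10 * k)%:Z.
  move=> p q hn j; have := hn j; rewrite crdB; lia.
apply: (core _ _ hk1 hN4 gC CsC Cset Zf gCs).
- move=> S [D [[j [lji compD]] [sD ->]]].
  have [xD [orbD [_ [guD _]]]] := h_i j D compD.
  have [g0 [Cs0 gD]] := gu_gform _ _ guD.
  have [x0 [Bx0 DE]] := compD.
  have Dx0 : D x0 by rewrite DE; apply: pconn_refl.
  have [a ea] := orbD x0 Dx0.
  have [b eb] := orbC x0 (sD x0 Dx0).
  have exD : xD = T (b - a) xC.
    have e0 : b - a - b + a = 0 by apply/rowP => jj; rewrite !mxE; ring.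
    by rewrite -(Tsub (b - a) b xC) -eb ea -hTadd e0 hT0.
  exists (g0 + (b - a)), Cs0.
  have -> : [set g | D (T g xC)] = [set v | [set g | D (T g xD)] (v - (b - a))].
    apply/seteqP; split => v /=; by rewrite exD Tsub.
  exact: gform_tr.
- move=> S [D [[j [lji compD]] [sD ->]]] p q /= Dq hn nDp.
  apply: NNPP => nCp.
  have neq : C <> D by move=> e; apply: nDC; exists D; split; [exists j|]; split => //.
  have := h_iii i j C D compC compD neq.
  move/seteqP => [+ _] => /(_ (T p xC)); apply.
  split; split => //.
  + exists (p - q), (T q xC); split; [exact: bnd|split; [exact: sD|by rewrite Tsub]].
  + exists (p - q), (T q xC); split; [exact: bnd|split; [done|by rewrite Tsub]].
- move=> S S' [D [[j [lji compD]] [sD ->]]] [D' [[j' [lji' compD']] [sD' ->]]] nSS p q q' /= Dq Dq' hn hn' nDp nDp'.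
  have neq : D <> D' by move=> e; apply: nSS; rewrite e.
  have := h_iii j j' D D' compD compD' neq.
  move/seteqP => [+ _] => /(_ (T p xC)); apply.
  split; split => //.
  + exists (p - q), (T q xC); split; [exact: bnd|split; [done|by rewrite Tsub]].
  + exists (p - q'), (T q' xC); split; [exact: bnd|split; [done|by rewrite Tsub]].
Qed.
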